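(* Let $\mathcal{M}$ be a set of models, $c:\mathcal{M}\to(0,\infty)$ a cost function, $\mathcal{S}$ a step neighborhood function, $m_0$ a base model, and $\bm{\alpha}=(\alpha_1,\alpha_2,\dots)$ a sequence of real weights, as in the context. Let $\lambda>0$. Then $$\min_{m\in\mathcal{M}}\big(c(m)+\lambda\mathcal{L}_{\bm{\alpha}}(m)\big)=\min_{K\ge 0}\Big(\min_{\bm{m}\in\mathcal{P}_K} c(m_K)+\lambda\sum_{k=1}^K\alpha_k c(m_k)\Big),$$ and if $K^*\ge0$ and $\bm{m}^*=(m^*_1,\dots,m^*_{K^*})\in\mathcal{P}_{K^*}$ attain the minimum on the right-hand side, then the model $m^*_{K^*}$ is Pareto optimal with respect to the two objectives $c(\cdot)$ and $\mathcal{L}_{\bm{\alpha}}(\cdot)$ on $\mathcal{M}$ (i.e., there is no $m\in\mathcal{M}$ with $c(m)\le c(m^*_{K^*})$ and $\mathcal{L}_{\bm{\alpha}}(m)\le\mathcal{L}_{\bm{\alpha}}(m^*_{K^*})$ with at least one inequality strict).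
   Context: Setting: $\mathcal{M}$ is a set (of models), $c:\mathcal{M}\to(0,\infty)$ is a cost function, and $\mathcal{S}:\mathcal{M}\to 2^{\mathcal{M}}$ is a step neighborhood function with $\mathcal{S}(m)\neq\emptyset$ for all $m$. A fixed base model $m_0\in\mathcal{M}$ is given. An interpretable path of length $K\ge 0$ is a sequence $\bm{m}=(m_1,\dots,m_K)$ with $m_k\in\mathcal{S}(m_{k-1})$ for $1\le k\le K$; its final model is $m_K$ (which is $m_0$ when $K=0$). $\mathcal{P}_K$ is the set of paths of length $K$, $\mathcal{P}_K(m)=\{\bm{m}\in\mathcal{P}_K:m_K=m\}$, $\mathcal{P}(m)=\bigcup_{K\ge0}\mathcal{P}_K(m)$. For a weight sequence $\bm{\alpha}$, the path loss is $\mathcal{L}_{\bm{\alpha}}(\bm{m})=\sum_{k=1}^{|\bm{m}|}\alpha_k c(m_k)$ (empty sum $=0$), and the model loss is $\mathcal{L}_{\bm{\alpha}}(m)=\min_{\bm{m}\in\mathcal{P}(m)}\mathcal{L}_{\bm{\alpha}}(\bm{m})$ if $\mathcal{P}(m)\neq\emptyset$ and $\infty$ otherwise. *)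

(* Defs.v *)
From mathcomp Require Import all_boot all_order all_algebra.
From mathcomp Require Import all_classical all_reals.
From mathcomp Require Import ereal.
Set Implicit Arguments. Unset Strict Implicit. Unset Printing Implicit Defensive.
Import Order.TTheory GRing.Theory Num.Theory.
Local Open Scope classical_set_scope.
Local Open Scope ring_scope.

Section Paths.
Context {R : realType} {M : Type}.

Fixpoint is_path (S : M -> set M) (x : M) (s : seq M) : Prop :=
  match s with
  | [::] => True
  | y :: s' => S x y /\ is_path S y s'
  end.

Definition paths_K (S : M -> set M) (m0 : M) (K : nat) : set (seq M) :=
  [set s | size s = K /\ is_path S m0 s].

Definition final_model (m0 : M) (s : seq M) : M := last m0 s.

Definition paths_to (S : M -> set M) (m0 : M) (m : M) : set (seq M) :=
  [set s | is_path S m0 s /\ final_model m0 s = m].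

(* path loss  L_alpha(s) = sum_{k=1}^{|s|} alpha_k c(m_k); alpha k = alpha_k *)
Definition path_loss (c : M -> R) (alpha : nat -> R) (m0 : M) (s : seq M) : R :=
  \sum_(k < size s) alpha k.+1 * c (nth m0 s k).

(* model loss L_alpha(m): the minimum (taken as infimum in \bar R) of the path
   loss over P(m); this is +oo when P(m) is empty. *)
Definition model_loss (S : M -> set M) (c : M -> R) (alpha : nat -> R) (m0 : M)
  (m : M) : \bar R :=
  ereal_inf [set (path_loss c alpha m0 s)%:E | s in paths_to S m0 m].

End Paths.

(* Main.v *)
Require Import Defs.
From mathcomp Require Import all_boot all_order all_algebra.
From mathcomp Require Import all_classical all_reals.
From mathcomp Require Import ereal.
From mathcomp Require Import lra.
Import Order.TTheory GRing.Theory Num.Theory.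
Local Open Scope classical_set_scope.
Local Open Scope ring_scope.

Theorem proposition1 (R : realType) (M : Type) (c : M -> R) (S : M -> set M)
  (m0 : M) (alpha : nat -> R) (lambda : R)
  (hc : forall m, 0 < c m)
  (hS : forall m, S m !=set0)
  (hlam : 0 < lambda) :
  (* equality of the two optimal values (minima, taken as infima in \bar R) *)
  ereal_inf [set ((c m)%:E + lambda%:E * model_loss S c alpha m0 m)%E | m in [set: M]]
  = ereal_inf [set ereal_inf [set ((c (final_model m0 s))%:E
                                   + (lambda * path_loss c alpha m0 s)%:E)%E
                              | s in paths_K S m0 K] | K in [set: nat]]
  /\
  (* any minimizer of the right-hand side yields a Pareto optimal final model *)
  (forall (Kstar : nat) (sstar : seq M),
     paths_K S m0 Kstar sstar ->
     ((c (final_model m0 sstar))%:E + (lambda * path_loss c alpha m0 sstar)%:E)%E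
       = ereal_inf [set ereal_inf [set ((c (final_model m0 s))%:E
                                        + (lambda * path_loss c alpha m0 s)%:E)%E
                                   | s in paths_K S m0 K] | K in [set: nat]] ->
     ~ (exists m : M,
          c m <= c (final_model m0 sstar) /\
          (model_loss S c alpha m0 m <= model_loss S c alpha m0 (final_model m0 sstar))%E /\
          (c m < c (final_model m0 sstar) \/
           (model_loss S c alpha m0 m < model_loss S c alpha m0 (final_model m0 sstar))%E))).
Proof.
set L := path_loss c alpha m0.
set ML := model_loss S c alpha m0.
set LHS := ereal_inf _.
set RHS := ereal_inf _.
have ML_le : forall s, is_path S m0 s -> (ML (final_model m0 s) <= (L s)%:E)%E.
  move=> s hs; apply: ereal_inf_lbound; exists s => //.
have RHS_le : forall s, is_path S m0 s ->
    (RHS <= (c (final_model m0 s))%:E + (lambda * L s)%:E)%E.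
  move=> s hs; apply: ge_ereal_inf; exists (ereal_inf [set ((c (final_model m0 s0))%:E
       + (lambda * path_loss c alpha m0 s0)%:E)%E | s0 in paths_K S m0 (size s)]).
    by exists (size s).
  by apply: ereal_inf_lbound; exists s.
have LHS_le : forall m, (LHS <= (c m)%:E + lambda%:E * ML m)%E.
  by move=> m; apply: ereal_inf_lbound; exists m.
have E1 : LHS = RHS.
  apply: le_anti; apply/andP; split.
    apply: le_ereal_inf_tmp => _ [K _ <-].
    apply: le_ereal_inf_tmp => _ [s [_ hs] <-].
    apply: (le_trans (LHS_le (final_model m0 s))).
    rewrite EFinM; apply: leeD2l; apply: lee_wpmul2l.
      by rewrite lee_fin ltW.
    exact: ML_le.
  apply: le_ereal_inf_tmp => _ [m _ <-].
  case ER: RHS => [r| |].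
  - have H1 : forall s, paths_to S m0 m s -> (((r - c m) / lambda)%:E <= (L s)%:E)%E.
      move=> s [hs hf]; have := RHS_le s hs; rewrite ER hf -EFinD lee_fin => h.
      rewrite lee_fin ler_pdivrMr //; lra.
    have H2 : (((r - c m) / lambda)%:E <= ML m)%E.
      by apply: le_ereal_inf_tmp => _ [s hs <-]; exact: H1.
    case EM: (ML m) => [y| |].
    + rewrite EM lee_fin ler_pdivrMr // in H2.
      rewrite -EFinM -EFinD lee_fin; lra.
    + by rewrite gt0_muley ?lte_fin // addey // leey.
    + by rewrite EM leeNy_eq in H2.
  - by have := RHS_le [::] I; rewrite ER leye_eq.
  - exact: leNye.
split => //.
move=> Kstar sstar [_ hs] hV [m [h1 [h2 h3]]].
have hMs := ML_le sstar hs.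
have := LHS_le m; rewrite E1 -hV.
case EM: (ML m) => [y| |].
- rewrite -EFinM -EFinD lee_fin => hv.
  rewrite EM in h2 h3.
  have hy := le_trans h2 hMs; rewrite lee_fin in hy.
  case: h3 => [hlt|hlt].
    nra.
  have hy' := lt_le_trans hlt hMs; rewrite lte_fin in hy'.
  nra.
- rewrite EM in h2; have := le_trans h2 hMs; by rewrite leye_eq.
- by rewrite gt0_muleNy ?lte_fin // addeNy leeNy_eq.
Qed.
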